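(* Let $p\in(1,5)$ and consider the third-order ordinary differential equation $\mathcal{L}u=0$ on $\mathbb{R}$, where $\mathcal{L}=\partial_x(-\partial_x^2+1-p\,\phi^{p-1})$. Its space of solutions is spanned by $\{\phi',h_2,h_3\}$, where $h_2,h_3$ are even functions satisfying $\lim_{x\to+\infty}h_2(x)=1$ and $\lim_{x\to+\infty}h_3(x)=\infty$. In particular, there is no solution $u$ of $\mathcal{L}u=0$ with $\lim_{x\to-\infty}u(x)=1$ and $\lim_{x\to+\infty}|u(x)|=\infty$.
   Context: $\phi(x)=\left(\frac{p+1}{2}\right)^{\frac1{p-1}}\mathrm{sech}^{\frac2{p-1}}\left(\frac{p-1}2x\right)$. *)

(* Defs.v *)
From Stdlib Require Import Reals.
From Coquelicot Require Import Coquelicot.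
Open Scope R_scope.

Definition sech (x : R) : R := / cosh x.

Definition phi (p x : R) : R :=
  Rpower ((p + 1) / 2) (1 / (p - 1)) *
  Rpower (sech ((p - 1) / 2 * x)) (2 / (p - 1)).

Definition Linner (p : R) (u : R -> R) (x : R) : R :=
  - Derive (Derive u) x + u x - p * Rpower (phi p x) (p - 1) * u x.

Definition is_sol (p : R) (u : R -> R) : Prop :=
  (forall x, ex_derive u x /\ ex_derive (Derive u) x) /\
  (forall x, is_derive (Linner p u) x 0).

(* Main.v *)
Require Import Defs.
From Stdlib Require Import Reals Lra.
From Coquelicot Require Import Coquelicot.
Open Scope R_scope.


Definition be (p : R) := (p - 1) / 2.
Definition al (p : R) := 2 / (p - 1).
Definition T (p x : R) := sinh (be p * x) / cosh (be p * x).
Definition Ei (p x : R) := exp (al p * ln (cosh (be p * x))).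

Lemma cosh_pos' y : 0 < cosh y.
Proof. unfold cosh. pose proof (exp_pos y); pose proof (exp_pos (-y)); lra. Qed.

Lemma cosh_sinh y : cosh y ^ 2 - sinh y ^ 2 = 1.
Proof. unfold cosh, sinh.
  assert (H: exp y * exp (-y) = 1) by (rewrite <- exp_plus; replace (y + -y) with 0 by ring; apply exp_0).
  nra. Qed.

Lemma dT p x : is_derive (T p) x (be p * (1 - T p x ^ 2)).
Proof.
  unfold T. pose proof (cosh_pos' (be p * x)).
  unfold cosh, sinh in *. auto_derive.
  - lra.
  - rewrite !exp_Ropp. pose proof (exp_pos (be p * x)).
    set (a := exp (be p * x)) in *. field.
    split; nra.
Qed.

Lemma dEi p x (hp : 1 < p) : is_derive (Ei p) x (T p x * Ei p x).
Proof.
  unfold T, Ei. pose proof (cosh_pos' (be p * x)).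
  unfold cosh, sinh in *. auto_derive.
  - lra.
  - unfold al, be. rewrite !exp_Ropp. pose proof (exp_pos ((p-1)/2 * x)).
    set (a := exp ((p-1)/2 * x)) in *. 
    set (e := exp _). field.
    split; nra.
Qed.

Definition E (p x : R) := / Ei p x.
Definition F (p x : R) := RInt (Ei p) 0 x.
Definition G (p x : R) := RInt (fun s => Ei p s ^ 2) 0 x.

Lemma Ei_pos p x : 0 < Ei p x.
Proof. apply exp_pos. Qed.

Lemma dE p x (hp : 1 < p) : is_derive (E p) x (- T p x * E p x).
Proof.
  unfold E. pose proof (Ei_pos p x).
  eapply is_derive_ext. { intro t. reflexivity. }
  replace (- T p x * / Ei p x) with (- (T p x * Ei p x) / (Ei p x)^2) by (field; lra).
  apply (is_derive_inv (Ei p) x). apply dEi; auto. lra.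
Qed.

Lemma Dr (f : R -> R) (x a b : R) : is_derive f x a -> a = b -> is_derive f x b.
Proof. intros; subst; auto. Qed.
Lemma D_mult (f g : R -> R) (x a b : R) : is_derive f x a -> is_derive g x b ->
  is_derive (fun t => f t * g t) x (a * g x + f x * b).
Proof. intros. apply (is_derive_mult f g x a b); auto. intros; apply Rmult_comm. Qed.
Lemma D_plus (f g : R -> R) (x a b : R) : is_derive f x a -> is_derive g x b ->
  is_derive (fun t => f t + g t) x (a + b).
Proof. intros. apply (is_derive_plus f g x a b); auto. Qed.
Lemma D_minus (f g : R -> R) (x a b : R) : is_derive f x a -> is_derive g x b ->
  is_derive (fun t => f t - g t) x (a - b).
Proof. intros. apply (is_derive_minus f g x a b); auto. Qed.
Lemma D_opp (f : R -> R) (x a : R) : is_derive f x a -> is_derive (fun t => - f t) x (- a).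
Proof. intros. apply (is_derive_opp f x a); auto. Qed.
Lemma D_const (c x : R) : is_derive (fun _ => c) x 0.
Proof. apply (is_derive_const (K:=R_AbsRing) (V:=R_NormedModule) c x). Qed.
Lemma D_pow2 (f : R -> R) (x a : R) : is_derive f x a -> is_derive (fun t => f t ^ 2) x (2 * a * f x).
Proof. intros. eapply is_derive_ext. { intro t. simpl. reflexivity. }
  eapply Dr. apply D_mult; [eauto| apply D_mult; [eauto | apply D_const]]. simpl; ring. Qed.


Lemma Ei_cont p x (hp : 1 < p) : continuous (Ei p) x.
Proof. apply (ex_derive_continuous (K:=R_AbsRing) (V:=R_NormedModule)). eexists. apply dEi; auto. Qed.

Lemma Ei2_cont p x (hp : 1 < p) : continuous (fun s => Ei p s ^ 2) x.
Proof. apply (ex_derive_continuous (K:=R_AbsRing) (V:=R_NormedModule)). eexists. apply D_pow2. apply dEi; auto. Qed.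

Lemma dF p x (hp : 1 < p) : is_derive (F p) x (Ei p x).
Proof.
  apply (is_derive_RInt (Ei p) (F p) 0 x).
  - apply filter_forall. intro b. unfold F, G. apply (RInt_correct (V:=R_CompleteNormedModule)). apply (ex_RInt_continuous (V:=R_CompleteNormedModule)).
    intros; apply Ei_cont; auto.
  - apply Ei_cont; auto.
Qed.

Lemma dG p x (hp : 1 < p) : is_derive (G p) x (Ei p x ^ 2).
Proof.
  apply (is_derive_RInt (fun s => Ei p s ^ 2) (G p) 0 x).
  - apply filter_forall. intro b. unfold F, G. apply (RInt_correct (V:=R_CompleteNormedModule)). apply (ex_RInt_continuous (V:=R_CompleteNormedModule)).
    intros; apply Ei2_cont; auto.
  - apply Ei2_cont; auto.
Qed.

Ltac D := lazymatch goal with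
  | |- is_derive (fun _ => ?c) _ _ => apply D_const
  | |- is_derive (fun t => T ?p t) _ _ => apply dT
  | |- is_derive (fun t => Ei ?p t) _ _ => apply dEi; assumption
  | |- is_derive (fun t => E ?p t) _ _ => apply dE; assumption
  | |- is_derive (fun t => F ?p t) _ _ => apply dF; assumption
  | |- is_derive (fun t => G ?p t) _ _ => apply dG; assumption
  | |- is_derive (fun t => @?f t * @?g t) _ _ => apply (D_mult f g); D
  | |- is_derive (fun t => @?f t + @?g t) _ _ => apply (D_plus f g); D
  | |- is_derive (fun t => @?f t - @?g t) _ _ => apply (D_minus f g); D
  | |- is_derive (fun t => - @?f t) _ _ => apply (D_opp f); D
  | |- is_derive (fun t => @?f t ^ 2) _ _ => apply (D_pow2 f); D
  end.

Definition A (p : R) := Rpower ((p + 1) / 2) (1 / (p - 1)).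
Definition M (p x : R) := - 2 * be p * (be p + 1) * T p x * (1 - T p x ^ 2)
   - T p x * (be p - (be p + 1) * T p x ^ 2).
Definition q (p x : R) := 1 - (2 * be p + 1) * (be p + 1) * (1 - T p x ^ 2).
Definition phi0 (p x : R) := A p * E p x.
Definition phi1 (p x : R) := - A p * T p x * E p x.
Definition phi2 (p x : R) := A p * ((1 + be p) * T p x ^ 2 - be p) * E p x.
Definition phi3 (p x : R) := A p * T p x * E p x *
  ((2 * be p ^ 2 + 3 * be p) - (2 * be p ^ 2 + 3 * be p + 1) * T p x ^ 2).
Definition H2 (p x : R) := 2 / (1 - p) * (1 - (be p + 1) * T p x * E p x * F p x).
Definition H2d (p x : R) := 2 / (1 - p) * (- (be p + 1)) *
  ((be p * (1 - T p x ^ 2) - T p x ^ 2) * E p x * F p x + T p x).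
Definition H2dd (p x : R) := 2 / (1 - p) * (- (be p + 1)) *
  (M p x * E p x * F p x + 2 * be p - (2 * be p + 1) * T p x ^ 2).
Definition H3 (p x : R) := - Ei p x + (be p + 2) * T p x * E p x * G p x.
Definition H3d (p x : R) := - T p x * Ei p x + (be p + 2) *
  ((be p - (be p + 1) * T p x ^ 2) * E p x * G p x + T p x * Ei p x).
Definition H3dd (p x : R) := - (be p * (1 - T p x ^ 2) + T p x ^ 2) * Ei p x + (be p + 2) *
  (M p x * E p x * G p x + 2 * be p * (1 - T p x ^ 2) * Ei p x).

Ltac fin := unfold E, M, be; field; repeat split; try (apply Rgt_not_eq; apply Ei_pos); try lra.

Lemma d_phi0 p x (hp : 1 < p) : is_derive (phi0 p) x (phi1 p x).
Proof. unfold phi0, phi1. eapply Dr. D. fin. Qed.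
Lemma d_phi1 p x (hp : 1 < p) : is_derive (phi1 p) x (phi2 p x).
Proof. unfold phi1, phi2. eapply Dr. D. fin. Qed.
Lemma d_phi2 p x (hp : 1 < p) : is_derive (phi2 p) x (phi3 p x).
Proof. unfold phi2, phi3. eapply Dr. D. fin. Qed.
Lemma d_H2 p x (hp : 1 < p) : is_derive (H2 p) x (H2d p x).
Proof. unfold H2, H2d. eapply Dr. D. fin. Qed.
Lemma d_H2d p x (hp : 1 < p) : is_derive (H2d p) x (H2dd p x).
Proof. unfold H2d, H2dd. eapply Dr. D. fin. Qed.
Lemma d_H3 p x (hp : 1 < p) : is_derive (H3 p) x (H3d p x).
Proof. unfold H3, H3d. eapply Dr. D. fin. Qed.
Lemma d_H3d p x (hp : 1 < p) : is_derive (H3d p) x (H3dd p x).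
Proof. unfold H3d, H3dd. eapply Dr. D. fin. Qed.

Lemma id_phi p x : - phi3 p x + q p x * phi1 p x = 0.
Proof. unfold phi3, phi1, q. ring. Qed.
Lemma id_H2 p x (hp : 1 < p) : - H2dd p x + q p x * H2 p x = 1.
Proof. unfold H2dd, H2, q, M, be. field. lra. Qed.
Lemma id_H3 p x : - H3dd p x + q p x * H3 p x = 0.
Proof. unfold H3dd, H3, q, M, E. field. pose proof (Ei_pos p x); lra. Qed.


Lemma phi_eq p x (hp : 1 < p) : phi p x = phi0 p x.
Proof.
  unfold phi, phi0, A, E, Ei, sech, al, be. f_equal.
  unfold Rpower. rewrite ln_Rinv by apply cosh_pos'.
  rewrite <- exp_Ropp. f_equal. ring.
Qed.

Lemma one_m_T2 p x : 1 - T p x ^ 2 = / cosh (be p * x) ^ 2.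
Proof. unfold T. pose proof (cosh_pos' (be p * x)). pose proof (cosh_sinh (be p * x)).
  set (c := cosh (be p * x)) in *. set (s := sinh (be p * x)) in *.
  replace (/ c^2) with ((c^2 - s^2)/c^2) by (rewrite H0; field; lra). unfold T. fold c s. field. lra. Qed.

Lemma Rp_eq p x (hp : 1 < p) : Rpower (phi p x) (p - 1) = (be p + 1) * (1 - T p x ^ 2).
Proof.
  rewrite phi_eq by auto. rewrite one_m_T2.
  pose proof (cosh_pos' (be p * x)).
  unfold phi0, A, E, Ei, Rpower.
  rewrite ln_mult by (apply exp_pos || (apply Rinv_0_lt_compat; apply exp_pos)).
  rewrite ln_Rinv by apply exp_pos. rewrite !ln_exp.
  replace ((p - 1) * (1 / (p - 1) * ln ((p + 1) / 2) + - (al p * ln (cosh (be p * x)))))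
    with (ln ((p + 1) / 2) + - (2 * ln (cosh (be p * x)))) by (unfold al; field; lra).
  rewrite exp_plus, exp_Ropp, exp_ln by lra.
  replace (2 * ln (cosh (be p * x))) with (ln (cosh (be p * x)) + ln (cosh (be p * x))) by ring.
  rewrite exp_plus, exp_ln by lra. unfold be in *. field. lra.
Qed.

Lemma q_eq p x (hp : 1 < p) : 1 - p * Rpower (phi p x) (p - 1) = q p x.
Proof. rewrite Rp_eq by auto. unfold q, be. field. Qed.

Lemma sol_of p (hp : 1 < p) (u u1 u2 : R -> R) c :
  (forall x, is_derive u x (u1 x)) -> (forall x, is_derive u1 x (u2 x)) ->
  (forall x, - u2 x + q p x * u x = c) -> is_sol p u.
Proof.
  intros Hu Hu1 Hc.
  assert (Du : forall t, Derive u t = u1 t) by (intro t; apply is_derive_unique; auto).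
  assert (DDu : forall t, Derive (Derive u) t = u2 t).
  { intro t. rewrite (Derive_ext _ _ _ Du). apply is_derive_unique; auto. }
  split.
  - intro x. split. eexists; eauto. eexists. eapply is_derive_ext. { intro t. symmetry. apply Du. } apply Hu1.
  - intro x. eapply is_derive_ext. 
    { intro t. symmetry. unfold Linner. rewrite DDu. 
      replace (- u2 t + u t - p * Rpower (phi p t) (p - 1) * u t) with
        (- u2 t + (1 - p * Rpower (phi p t) (p - 1)) * u t) by ring.
      rewrite q_eq by auto. apply Hc. }
    apply D_const.
Qed.

Lemma Dphi_eq p (hp : 1 < p) t : Derive (phi p) t = phi1 p t.
Proof. rewrite (Derive_ext _ (phi0 p) t) by (intro; apply phi_eq; auto).
  apply is_derive_unique. apply d_phi0; auto. Qed.

Lemma sol_phi p (hp : 1 < p) : is_sol p (Derive (phi p)).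
Proof.
  apply (sol_of p hp _ (phi2 p) (phi3 p) 0).
  - intro x. eapply is_derive_ext. { intro t. symmetry. apply Dphi_eq; auto. } apply d_phi1; auto.
  - intro x. apply d_phi2; auto.
  - intro x. rewrite Dphi_eq by auto. apply id_phi.
Qed.

Lemma sol_H2 p (hp : 1 < p) : is_sol p (H2 p).
Proof.
  apply (sol_of p hp _ (H2d p) (H2dd p) 1).
  - intro x. apply d_H2; auto.
  - intro x. apply d_H2d; auto.
  - intro x. apply id_H2; auto.
Qed.

Lemma sol_H3 p (hp : 1 < p) : is_sol p (H3 p).
Proof.
  apply (sol_of p hp _ (H3d p) (H3dd p) 0).
  - intro x. apply d_H3; auto.
  - intro x. apply d_H3d; auto.
  - intro x. apply id_H3; auto.
Qed.

Lemma const_of (f : R -> R) : (forall x, is_derive f x 0) -> forall x, f x = f 0.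
Proof.
  intros Hf x.
  destruct (MVT_gen f 0 x (fun _ => 0)) as [c [_ Hc]].
  - intros; apply Hf.
  - intros. apply continuity_pt_filterlim.
    apply (ex_derive_continuous (K:=R_AbsRing) (V:=R_NormedModule)). eexists; apply Hf.
  - lra.
Qed.

Lemma T0 p : T p 0 = 0.
Proof. unfold T. rewrite Rmult_0_r, cosh_0. unfold sinh. rewrite Ropp_0. field. Qed.
Lemma Ei0 p : Ei p 0 = 1.
Proof. unfold Ei. rewrite Rmult_0_r, cosh_0, ln_1, Rmult_0_r. apply exp_0. Qed.
Lemma G0 p : G p 0 = 0.
Proof. unfold G. apply (RInt_point (V:=R_CompleteNormedModule)). Qed.
Lemma A_pos p : 0 < A p.
Proof. apply exp_pos. Qed.

Lemma kernel p (hp : 1 < p) (y y1 : R -> R) :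
  (forall x, is_derive y x (y1 x)) -> (forall x, is_derive y1 x (q p x * y x)) ->
  exists a c, forall x, y x = a * phi1 p x + c * H3 p x.
Proof.
  intros Hy Hy1.
  set (W1 := fun x => phi1 p x * y1 x - phi2 p x * y x).
  set (W2 := fun x => H3 p x * y1 x - H3d p x * y x).
  set (Dl := fun x => phi2 p x * H3 p x - phi1 p x * H3d p x).
  assert (C1 : forall x, W1 x = W1 0).
  { apply const_of. intro x. eapply Dr. apply D_minus; apply D_mult; auto.
    apply d_phi1; auto. apply d_phi2; auto.
    pose proof (id_phi p x). nra. }
  assert (C2 : forall x, W2 x = W2 0).
  { apply const_of. intro x. eapply Dr. apply D_minus; apply D_mult; auto.
    apply d_H3; auto. apply d_H3d; auto.
    pose proof (id_H3 p x). nra. }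
  assert (C3 : forall x, Dl x = Dl 0).
  { apply const_of. intro x. eapply Dr. apply D_minus; apply D_mult; auto.
    apply d_phi2; auto. apply d_H3; auto. apply d_phi1; auto. apply d_H3d; auto.
    pose proof (id_H3 p x). pose proof (id_phi p x). nra. }
  assert (D0 : Dl 0 = A p * be p).
  { unfold Dl, phi1, phi2, H3, H3d, E. rewrite T0, Ei0, G0. field. }
  assert (Dpos : 0 < Dl 0).
  { rewrite D0. apply Rmult_lt_0_compat. apply A_pos. unfold be; lra. }
  exists (W2 0 / Dl 0), (- W1 0 / Dl 0). intro x.
  rewrite <- (C1 x), <- (C2 x), <- (C3 x) in *.
  assert (Dl x <> 0) by lra.
  unfold W1, W2. apply (Rmult_eq_reg_r (Dl x)); auto. field_simplify; auto. unfold Dl. ring.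
Qed.

Lemma span p (hp : 1 < p) (u : R -> R) : is_sol p u ->
  exists a b c : R, forall x, u x = a * Derive (phi p) x + b * H2 p x + c * H3 p x.
Proof.
  intros [Hd HL].
  set (k := Linner p u 0).
  assert (Hk : forall x, Linner p u x = k) by (apply const_of; auto).
  assert (DD : forall x, Derive (Derive u) x = q p x * u x - k).
  { intro x. rewrite <- (Hk x). unfold Linner. rewrite <- q_eq by auto. ring. }
  destruct (kernel p hp (fun x => u x - k * H2 p x) (fun x => Derive u x - k * H2d p x))
    as [a [c Hac]].
  - intro x. apply D_minus. apply Derive_correct. apply Hd.
    eapply Dr. apply D_mult. apply D_const. apply d_H2; auto. cbv beta; ring.
  - intro x. eapply Dr. apply D_minus. 
    + apply Derive_correct. apply Hd.
    + eapply Dr. apply D_mult. apply D_const. apply d_H2d; auto. cbv beta. reflexivity.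
    + rewrite DD. pose proof (id_H2 p x hp). nra.
  - exists a, k, c. intro x. rewrite Dphi_eq by auto. specialize (Hac x). simpl in Hac. lra.
Qed.


Lemma mono (k dk : R -> R) a b : (forall x, is_derive k x (dk x)) ->
  (forall x, a <= x -> dk x <= 0) -> a <= b -> k b <= k a.
Proof.
  intros Hk Hs Hab.
  destruct (MVT_gen k a b dk) as [c [Hc Heq]].
  - intros; apply Hk.
  - intros. apply continuity_pt_filterlim.
    apply (ex_derive_continuous (K:=R_AbsRing) (V:=R_NormedModule)). eexists; apply Hk.
  - rewrite Rmin_left in Hc by auto. rewrite Rmax_right in Hc by auto.
    assert (dk c <= 0) by (apply Hs; lra). nra.
Qed.

Lemma abs_div_lt h g e : 0 < g -> - (e * g) < h < e * g -> Rabs (h / g) < e.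
Proof.
  intros Hg [H1 H2]. apply Rabs_def1.
  - apply Rlt_div_l; lra.
  - replace (- e) with ((- e * g) / g) by (field; lra). unfold Rdiv. 
    apply Rmult_lt_compat_r. apply Rinv_0_lt_compat; lra. lra.
Qed.

Lemma LH (f g df dg : R -> R) (L : R) :
  (forall x, is_derive f x (df x)) -> (forall x, is_derive g x (dg x)) ->
  (exists M0, forall x, M0 <= x -> 0 < dg x) -> is_lim g p_infty p_infty ->
  (forall e, 0 < e -> exists M, forall x, M <= x -> Rabs (df x - L * dg x) <= e * dg x) ->
  is_lim (fun x => f x / g x) p_infty L.
Proof.
  intros Hf Hg [M0 HM0] Hgl Hr.
  apply is_lim_spec. intro eps.
  set (e := pos eps / 2).
  assert (He : 0 < e) by (unfold e; destruct eps; simpl; lra).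
  destruct (Hr e He) as [M HM].
  set (M1 := Rmax M M0).
  assert (HM1 : forall x, M1 <= x -> M <= x /\ M0 <= x).
  { intros x Hx. unfold M1 in Hx. split; eapply Rle_trans; eauto. apply Rmax_l. apply Rmax_r. }
  set (k1 := fun x => f x - (L + e) * g x).
  set (k2 := fun x => (L - e) * g x - f x).
  assert (K1 : forall x, M1 <= x -> k1 x <= k1 M1).
  { intros x Hx. apply (mono k1 (fun x => df x - (L + e) * dg x)); auto.
    - intro y. unfold k1. apply D_minus; auto. eapply Dr. apply D_mult. apply D_const. apply Hg.
      cbv beta. ring.
    - intros y Hy. destruct (HM1 y Hy). specialize (HM y H). apply Rabs_le_between in HM. lra. }
  assert (K2 : forall x, M1 <= x -> k2 x <= k2 M1).
  { intros x Hx. apply (mono k2 (fun x => (L - e) * dg x - df x)); auto.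
    - intro y. unfold k2. apply D_minus; auto. eapply Dr. apply D_mult. apply D_const. apply Hg.
      cbv beta. ring.
    - intros y Hy. destruct (HM1 y Hy). specialize (HM y H). apply Rabs_le_between in HM. lra. }
  apply is_lim_spec in Hgl.
  destruct (Hgl ((Rabs (k1 M1) + Rabs (k2 M1)) / e + 1)) as [N HN].
  exists (Rmax N M1). intros x Hx.
  assert (HxN : N < x) by (eapply Rle_lt_trans; [apply Rmax_l|]; eauto).
  assert (HxM : M1 <= x) by (left; eapply Rle_lt_trans; [apply Rmax_r|]; eauto).
  specialize (HN x HxN). specialize (K1 x HxM). specialize (K2 x HxM).
  unfold k1, k2 in K1, K2.
  assert (Hb : 0 <= (Rabs (k1 M1) + Rabs (k2 M1)) / e).
  { apply Rmult_le_pos. pose proof (Rabs_pos (k1 M1)); pose proof (Rabs_pos (k2 M1)); lra.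
    left; apply Rinv_0_lt_compat; lra. }
  assert (Hgx : 0 < g x) by lra.
  assert (Hb2 : Rabs (k1 M1) + Rabs (k2 M1) < e * g x).
  { assert ((Rabs (k1 M1) + Rabs (k2 M1)) / e < g x) by lra.
    apply Rlt_div_l in H; lra. }
  pose proof (Rle_abs (k1 M1)). pose proof (Rle_abs (k2 M1)).
  pose proof (Rabs_pos (k1 M1)). pose proof (Rabs_pos (k2 M1)).
  fold (k1 M1) in K1. fold (k2 M1) in K2.
  replace (f x / g x - L) with ((f x - L * g x) / g x) by (field; lra).
  apply abs_div_lt; auto. unfold e in *. split; lra.
Qed.


Lemma T_form p x : T p x = (exp (be p * x) * exp (be p * x) - 1) / (exp (be p * x) * exp (be p * x) + 1).
Proof. unfold T, sinh, cosh. rewrite exp_Ropp. pose proof (exp_pos (be p * x)).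
  field. split; nra. Qed.

Lemma one_m_T p x : 1 - T p x = 2 / (exp (be p * x) * exp (be p * x) + 1).
Proof. rewrite T_form. pose proof (exp_pos (be p * x)). field. nra. Qed.

Lemma T_le1 p x : T p x <= 1.
Proof. pose proof (one_m_T p x). pose proof (exp_pos (be p * x)).
  assert (0 < 2 / (exp (be p * x) * exp (be p * x) + 1)).
  { apply Rdiv_lt_0_compat; nra. } lra. Qed.

Lemma T_ge p x (hp : 1 < p) : 0 <= x -> 1 - T p x <= 2 / (1 + be p * x).
Proof. intro Hx. rewrite one_m_T. pose proof (exp_ineq1_le (be p * x)).
  assert (0 <= be p * x) by (unfold be; apply Rmult_le_pos; lra).
  set (a := exp (be p * x)) in *.
  apply Rmult_le_reg_r with ((a * a + 1) * (1 + be p * x)). nra.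
  field_simplify; nra. Qed.

Lemma T_pos p x (hp : 1 < p) : 0 < x -> 0 < T p x.
Proof. intro Hx. rewrite T_form. pose proof (exp_ineq1_le (be p * x)).
  assert (0 < be p * x) by (unfold be; apply Rmult_lt_0_compat; lra).
  apply Rdiv_lt_0_compat; nra. Qed.

Lemma cosh_ge1 y : 1 <= cosh y.
Proof. unfold cosh. rewrite exp_Ropp. pose proof (exp_pos y). set (a := exp y) in *.
  apply Rmult_le_reg_r with (2 * a). lra. field_simplify; [| lra]. pose proof (pow2_ge_0 (a - 1)). nra. Qed.

Lemma Ei_ge1 p x (hp : 1 < p) : 1 <= Ei p x.
Proof. unfold Ei. pose proof (exp_ineq1_le (al p * ln (cosh (be p * x)))).
  assert (0 <= ln (cosh (be p * x))). { rewrite <- ln_1. apply ln_le. lra. apply cosh_ge1. }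
  assert (0 <= al p * ln (cosh (be p * x))). { apply Rmult_le_pos; auto. unfold al.
    apply Rmult_le_pos. lra. left. apply Rinv_0_lt_compat. lra. } lra. Qed.

Lemma Ei_lb p x (hp : 1 < p) : 1 + x - al p * ln 2 <= Ei p x.
Proof. unfold Ei. pose proof (exp_ineq1_le (al p * ln (cosh (be p * x)))).
  assert (Hc : exp (be p * x) / 2 <= cosh (be p * x)).
  { unfold cosh. pose proof (exp_pos (- (be p * x))). lra. }
  assert (Hl : ln (exp (be p * x) / 2) <= ln (cosh (be p * x))).
  { apply ln_le; auto. pose proof (exp_pos (be p * x)). lra. }
  unfold Rdiv in Hl. rewrite ln_mult in Hl. rewrite ln_exp, ln_Rinv in Hl.
  2: lra. 2: apply exp_pos. 2: lra.
  assert (Ha : 0 < al p) by (unfold al; apply Rdiv_lt_0_compat; lra).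
  assert (al p * (be p * x + - ln 2) <= al p * ln (cosh (be p * x))) by (apply Rmult_le_compat_l; lra).
  replace (al p * (be p * x + - ln 2)) with (x - al p * ln 2) in H0 by (unfold al, be; field; lra).
  lra. Qed.

Lemma lim_Ei p (hp : 1 < p) : is_lim (Ei p) p_infty p_infty.
Proof. apply is_lim_spec. intro M. exists (M + al p * ln 2). intros x Hx.
  pose proof (Ei_lb p x hp). lra. Qed.

Lemma lim_T p (hp : 1 < p) : is_lim (T p) p_infty 1.
Proof. apply is_lim_spec. intro eps. destruct eps as [e He]. simpl.
  assert (Hb : 0 < be p) by (unfold be; lra).
  exists (2 / (be p * e)). intros x Hx.
  assert (0 < 2 / (be p * e)) by (apply Rdiv_lt_0_compat; nra).
  pose proof (T_ge p x hp ltac:(lra)). pose proof (T_le1 p x).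
  rewrite Rabs_left1 by lra.
  assert (2 / (1 + be p * x) < e).
  { apply Rlt_div_l. nra. apply Rlt_div_l in Hx; nra. }
  lra. Qed.

Lemma T_close p (hp : 1 < p) e : 0 < e -> exists M, 1 <= M /\ forall x, M <= x -> 1 - T p x <= e.
Proof. intro He. assert (Hb : 0 < be p) by (unfold be; lra).
  exists (1 + 2 / (be p * e)). assert (0 < 2 / (be p * e)) by (apply Rdiv_lt_0_compat; nra).
  split. lra. intros x Hx.
  pose proof (T_ge p x hp ltac:(lra)).
  assert (2 / (1 + be p * x) <= e).
  { apply Rle_div_l. nra.
    assert (2 / (be p * e) * (be p * e) = 2) by (field; lra). 
    assert (be p * e * x >= be p * e * (2 / (be p * e))) by (apply Rmult_ge_compat_l; nra).
    nra. }
  lra. Qed.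

Lemma ratio_hyp p (hp : 1 < p) (c : R) : 1 <= c ->
  forall e, 0 < e -> exists M, forall x, M <= x ->
   Rabs (Ei p x ^ 2 - 1 / c * (c * T p x * Ei p x ^ 2)) <= e * (c * T p x * Ei p x ^ 2) /\
   Rabs (Ei p x - 1 * (T p x * Ei p x)) <= e * (T p x * Ei p x).
Proof. intros Hc e He.
  destruct (T_close p hp (e / (1 + e))) as [M [HM1 HM]]. apply Rdiv_lt_0_compat; lra.
  exists M. intros x Hx. specialize (HM x Hx).
  pose proof (T_le1 p x). pose proof (Ei_pos p x).
  assert (HT : 1 <= (1 + e) * T p x).
  { assert (H1: (1 - T p x)*(1+e) <= e/(1+e)*(1+e)) by (apply Rmult_le_compat_r; lra).
    replace (e / (1+e) * (1+e)) with e in H1 by (field; lra). lra. }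
  split.
  - replace (Ei p x ^ 2 - 1 / c * (c * T p x * Ei p x ^ 2)) with (Ei p x ^ 2 * (1 - T p x)) by (field; lra).
    rewrite Rabs_pos_eq by (apply Rmult_le_pos; nra).
    assert (0 < Ei p x ^ 2) by nra. 
    assert (1 - T p x <= e * c * T p x) by nra. nra.
  - replace (Ei p x - 1 * (T p x * Ei p x)) with (Ei p x * (1 - T p x)) by ring.
    rewrite Rabs_pos_eq by (apply Rmult_le_pos; nra). nra.
Qed.

Lemma lim_FEi p (hp : 1 < p) : is_lim (fun x => F p x / Ei p x) p_infty 1.
Proof.
  apply (LH (F p) (Ei p) (Ei p) (fun x => T p x * Ei p x) 1).
  - intro; apply dF; auto.
  - intro; apply dEi; auto.
  - exists 1. intros. apply Rmult_lt_0_compat. apply T_pos; auto; lra. apply Ei_pos.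
  - apply lim_Ei; auto.
  - intros e He. destruct (ratio_hyp p hp 1 (Rle_refl _) e He) as [M HM].
    exists M. intros x Hx. apply HM; auto.
Qed.

Lemma lim_Ei2 p (hp : 1 < p) : is_lim (fun x => Ei p x ^ 2) p_infty p_infty.
Proof. apply (is_lim_le_p_loc (Ei p)). exists 0. intros x _. pose proof (Ei_ge1 p x hp). nra.
  apply lim_Ei; auto. Qed.

Lemma lim_GEi p (hp : 1 < p) : is_lim (fun x => G p x / Ei p x ^ 2) p_infty (1/2).
Proof.
  apply (LH (G p) (fun x => Ei p x ^ 2) (fun x => Ei p x ^ 2) (fun x => 2 * T p x * Ei p x ^ 2) (1/2)).
  - intro; apply dG; auto.
  - intro. eapply Dr. apply D_pow2. apply dEi; auto. ring.
  - exists 1. intros. pose proof (T_pos p x hp ltac:(lra)). pose proof (Ei_pos p x).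
    apply Rmult_lt_0_compat. lra. nra.
  - apply lim_Ei2; auto.
  - intros e He. destruct (ratio_hyp p hp 2 ltac:(lra) e He) as [M HM].
    exists M. intros x Hx. apply HM; auto.
Qed.


Lemma Lf_mult (f g : R -> R) x (a b : R) : is_lim f x a -> is_lim g x b ->
  is_lim (fun y => f y * g y) x (a * b).
Proof. intros. apply (is_lim_mult f g x a b); auto. exact I. Qed.
Lemma Lf_plus (f g : R -> R) x (a b : R) : is_lim f x a -> is_lim g x b ->
  is_lim (fun y => f y + g y) x (a + b).
Proof. intros. apply (is_lim_plus f g x a b); auto. reflexivity. Qed.
Lemma Lf_minus (f g : R -> R) x (a b : R) : is_lim f x a -> is_lim g x b ->
  is_lim (fun y => f y - g y) x (a - b).
Proof. intros. apply (is_lim_minus f g x a b); auto. reflexivity. Qed.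
Lemma Lf_const (c : R) x : is_lim (fun _ => c) x c.
Proof. apply is_lim_const. Qed.

Lemma lim_H2 p (hp : 1 < p) : is_lim (H2 p) p_infty 1.
Proof.
  apply (is_lim_ext (fun x => 2 / (1 - p) * (1 - (be p + 1) * (T p x * (F p x / Ei p x))))).
  { intro y. unfold H2, E. pose proof (Ei_pos p y). field. lra. }
  replace (Finite 1) with (Finite (2 / (1 - p) * (1 - (be p + 1) * (1 * 1)))) by (f_equal; unfold be; field; lra).
  apply Lf_mult. apply Lf_const. apply Lf_minus. apply Lf_const. apply Lf_mult. apply Lf_const.
  apply Lf_mult. apply lim_T; auto. apply lim_FEi; auto.
Qed.

Lemma lim_H3 p (hp : 1 < p) : is_lim (H3 p) p_infty p_infty.
Proof.
  apply (is_lim_ext (fun x => Ei p x * (-1 + (be p + 2) * (T p x * (G p x / Ei p x ^ 2))))).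
  { intro y. unfold H3, E. pose proof (Ei_pos p y). field. lra. }
  assert (Hc : 0 < -1 + (be p + 2) * (1 * (1/2))) by (unfold be; lra).
  set (c := -1 + (be p + 2) * (1 * (1/2))) in *.
  assert (Hm : Rbar_mult p_infty c = p_infty).
  { simpl. destruct (Rle_dec 0 c); [|lra]. destruct (Rle_lt_or_eq_dec 0 c r); auto. lra. }
  cut (is_lim (fun x => Ei p x * (-1 + (be p + 2) * (T p x * (G p x / Ei p x ^ 2)))) p_infty (Rbar_mult p_infty c)).
  { rewrite Hm. auto. }
  apply is_lim_mult. apply lim_Ei; auto.
  unfold c. apply Lf_plus. apply Lf_const. apply Lf_mult. apply Lf_const. apply Lf_mult.
  apply lim_T; auto. apply lim_GEi; auto.
  simpl. lra.
Qed.

Lemma lim_E p (hp : 1 < p) : is_lim (E p) p_infty 0.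
Proof. unfold E. replace (Finite 0) with (Rbar_inv p_infty) by reflexivity.
  apply (is_lim_inv (Ei p)). apply lim_Ei; auto. discriminate. Qed.

Lemma lim_phi1 p (hp : 1 < p) : is_lim (phi1 p) p_infty 0.
Proof. replace (Finite 0) with (Finite (- A p * 1 * 0)) by (f_equal; ring).
  apply Lf_mult. apply Lf_mult. apply Lf_const. apply lim_T; auto. apply lim_E; auto. Qed.

Lemma cosh_even y : cosh (- y) = cosh y.
Proof. unfold cosh. rewrite Ropp_involutive, Rplus_comm. reflexivity. Qed.
Lemma sinh_odd y : sinh (- y) = - sinh y.
Proof. unfold sinh. rewrite Ropp_involutive. field. Qed.
Lemma T_odd p x : T p (- x) = - T p x.
Proof. unfold T. replace (be p * - x) with (- (be p * x)) by ring.
  rewrite cosh_even, sinh_odd. pose proof (cosh_pos' (be p * x)). field. lra. Qed.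
Lemma Ei_even p x : Ei p (- x) = Ei p x.
Proof. unfold Ei. replace (be p * - x) with (- (be p * x)) by ring. rewrite cosh_even. auto. Qed.
Lemma E_even p x : E p (- x) = E p x.
Proof. unfold E. rewrite Ei_even. auto. Qed.

Lemma D_oppc (f : R -> R) x a : is_derive f (- x) a -> is_derive (fun t => f (- t)) x (- a).
Proof. intro H. eapply Dr. apply (is_derive_comp f (fun t => - t)). exact H.
  apply (D_opp (fun t => t)). apply (is_derive_id (K:=R_AbsRing)).
  simpl. unfold scal, one, opp, mult; simpl. unfold one, opp, mult; simpl. ring. Qed.

Lemma F_odd p (hp : 1 < p) x : F p (- x) = - F p x.
Proof.
  assert (H : forall x, (fun t => F p (- t) + F p t) x = (fun t => F p (- t) + F p t) 0).
  { apply const_of. intro y. eapply Dr. apply D_plus. apply D_oppc. apply dF; auto. apply dF; auto.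
    rewrite Ei_even. ring. }
  specialize (H x). simpl in H. rewrite Ropp_0 in H.
  assert (F p 0 = 0) by (unfold F; apply (RInt_point (V:=R_CompleteNormedModule))). lra.
Qed.
Lemma G_odd p (hp : 1 < p) x : G p (- x) = - G p x.
Proof.
  assert (H : forall x, (fun t => G p (- t) + G p t) x = (fun t => G p (- t) + G p t) 0).
  { apply const_of. intro y. eapply Dr. apply D_plus. apply D_oppc. apply dG; auto. apply dG; auto.
    rewrite Ei_even. ring. }
  specialize (H x). simpl in H. rewrite Ropp_0 in H. rewrite G0 in H. lra.
Qed.

Lemma H2_even p (hp : 1 < p) x : H2 p (- x) = H2 p x.
Proof. unfold H2. rewrite T_odd, E_even, F_odd by auto. ring. Qed.
Lemma H3_even p (hp : 1 < p) x : H3 p (- x) = H3 p x.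
Proof. unfold H3. rewrite T_odd, E_even, G_odd, Ei_even by auto. ring. Qed.
Lemma phi1_odd p x : phi1 p (- x) = - phi1 p x.
Proof. unfold phi1. rewrite T_odd, E_even. ring. Qed.


Lemma Rbar_fin_inj (a b : R) : Finite a = Finite b -> a = b.
Proof. intro H. injection H. auto. Qed.

Theorem mainTheorem6 (p : R) (hp1 : 1 < p) (hp5 : p < 5) :
  (exists h2 h3 : R -> R,
     is_sol p (Derive (phi p)) /\ is_sol p h2 /\ is_sol p h3 /\
     (forall x, h2 (- x) = h2 x) /\ (forall x, h3 (- x) = h3 x) /\
     is_lim h2 p_infty 1 /\ is_lim h3 p_infty p_infty /\
     (forall u : R -> R, is_sol p u ->
        exists a b c : R, forall x,
          u x = a * Derive (phi p) x + b * h2 x + c * h3 x)) /\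
  ~ (exists u : R -> R, is_sol p u /\ is_lim u m_infty 1 /\
       is_lim (fun x => Rabs (u x)) p_infty p_infty).
Proof.
  split.
  - exists (H2 p), (H3 p).
    split. apply sol_phi; auto.
    split. apply sol_H2; auto.
    split. apply sol_H3; auto.
    split. intro; apply H2_even; auto.
    split. intro; apply H3_even; auto.
    split. apply lim_H2; auto.
    split. apply lim_H3; auto.
    intros u Hu. apply span; auto.
  - intros [u [Hu [Hl Hr]]].
    destruct (span p hp1 u Hu) as [a [b [c Hu']]].
    assert (Hv : is_lim (fun x => u (- x)) p_infty 1).
    { apply (is_lim_comp u (fun x => - x) p_infty 1 m_infty); auto.
      replace m_infty with (Rbar_opp p_infty) by reflexivity.
      apply is_lim_opp. apply is_lim_id.
      exists 0. intros. discriminate. }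
    assert (Hv' : forall x, u (- x) = - a * phi1 p x + b * H2 p x + c * H3 p x).
    { intro x. rewrite Hu', Dphi_eq, phi1_odd, H2_even, H3_even by auto. ring. }
    destruct (Req_dec c 0) as [Hc | Hc].
    + subst c.
      assert (Hb : is_lim (fun x => u (- x)) p_infty (- a * 0 + b * 1)).
      { apply (is_lim_ext (fun x => - a * phi1 p x + b * H2 p x)).
        { intro; rewrite Hv'. ring. }
        apply Lf_plus; apply Lf_mult; try apply Lf_const. apply lim_phi1; auto. apply lim_H2; auto. }
      apply is_lim_unique in Hb. apply is_lim_unique in Hv. rewrite Hv in Hb.
      apply Rbar_fin_inj in Hb. assert (b = 1) by lra. subst b.
      assert (Hp : is_lim (fun x => Rabs (u x)) p_infty (Rabs (a * 0 + 1 * 1))).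
      { apply (is_lim_Rabs u p_infty (a * 0 + 1 * 1)).
        apply (is_lim_ext (fun x => a * phi1 p x + 1 * H2 p x)).
        { intro; rewrite Hu', Dphi_eq by auto. ring. }
        apply Lf_plus; apply Lf_mult; try apply Lf_const. apply lim_phi1; auto. apply lim_H2; auto. }
      apply is_lim_unique in Hp. apply is_lim_unique in Hr. rewrite Hr in Hp. discriminate.
    + assert (H3l : is_lim (H3 p) p_infty ((1 + a * 0 - b * 1) / c)).
      { apply (is_lim_ext (fun x => (u (- x) + a * phi1 p x - b * H2 p x) * / c)).
        { intro; rewrite Hv'. field. auto. }
        apply Lf_mult; [| apply Lf_const].
        apply Lf_minus. apply Lf_plus. auto. apply Lf_mult. apply Lf_const. apply lim_phi1; auto.
        apply Lf_mult. apply Lf_const. apply lim_H2; auto. }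
      apply is_lim_unique in H3l. rewrite (is_lim_unique _ _ _ (lim_H3 p hp1)) in H3l. discriminate.
Qed.
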